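(* Let $s$ be a Sturmian word with a factorization $s=U_1U_2\cdots U_n\cdots$ into non-empty factors $U_i$ of $s$. If $r_s(U_i)=r_s(U_j)$ for all $i,j\ge 1$, then for every $M>0$ there exists an index $i$ with $|U_i|>M$.
   Context: A Sturmian word is an infinite word $s\in\{a,b\}^{\omega}$ that is aperiodic (not ultimately periodic) and balanced: for all factors $u,v$ of $s$ with $|u|=|v|$ one has $||u|_x-|v|_x|\le 1$ for $x\in\{a,b\}$, where $|u|_x$ is the number of occurrences of $x$ in $u$. A non-empty factor $w$ of $s$ is rich in the letter $z\in\{a,b\}$ if there is a factor $v$ of $s$ with $|v|=|w|$ and $|w|_z>|v|_z$; every non-empty factor of a Sturmian word is rich in exactly one letter, and $r_s(w)\in\{a,b\}$ denotes that letter. *)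

(* Defs.v *)
From Stdlib Require Import ClassicalEpsilon.
From HB Require Import structures.
From mathcomp Require Import all_boot.
Set Implicit Arguments. Unset Strict Implicit. Unset Printing Implicit Defensive.

Inductive letter := la | lb.
Definition letter_eqb (x y : letter) : bool :=
  match x, y with la, la | lb, lb => true | _, _ => false end.
Lemma letter_eqP : Equality.axiom letter_eqb.
Proof. by case; case; constructor. Qed.
HB.instance Definition _ := hasDecEq.Build letter letter_eqP.

Definition infword := nat -> letter.

Definition factor_at (s : infword) (k n : nat) : seq letter :=
  [seq s (k + i) | i <- iota 0 n].

Definition is_factor (s : infword) (w : seq letter) : Prop :=
  exists k, w = factor_at s k (size w).

Definition occ (x : letter) (u : seq letter) : nat := count_mem x u.

Definition ult_periodic (s : infword) : Prop :=
  exists p N, 0 < p /\ forall n, N <= n -> s (n + p) = s n.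

Definition balanced (s : infword) : Prop :=
  forall u v x, is_factor s u -> is_factor s v -> size u = size v ->
    occ x u <= (occ x v).+1 /\ occ x v <= (occ x u).+1.

Definition sturmian (s : infword) : Prop := ~ ult_periodic s /\ balanced s.

Definition rich (s : infword) (z : letter) (w : seq letter) : Prop :=
  exists v, is_factor s v /\ size v = size w /\ occ z v < occ z w.

(* r_s(w): the letter in which w is rich (well defined for non-empty factors
   of a Sturmian word, where it is unique). *)
Definition r_s (s : infword) (w : seq letter) : letter :=
  epsilon (inhabits la) (fun z => rich s z w).

(* s = U_0 U_1 U_2 ... : the concatenation of the U_i equals s. *)
Definition start_pos (U : nat -> seq letter) (i : nat) : nat :=
  \sum_(j < i) size (U j).

Definition is_factorization (s : infword) (U : nat -> seq letter) : Prop :=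
  forall i k, k < size (U i) -> nth la (U i) k = s (start_pos U i + k).

(* Main.v *)
Require Import Defs.
From mathcomp Require Import all_boot.
From mathcomp Require Import zify.
From Stdlib Require Import Classical ClassicalEpsilon.

Lemma size_factor_at s k n : size (factor_at s k n) = n.
Proof. by rewrite /factor_at size_map size_iota. Qed.

Lemma factor_is_factor s k n : is_factor s (factor_at s k n).
Proof. by exists k; rewrite size_factor_at. Qed.

Lemma factor_split s q a b :
  factor_at s q (a + b) = factor_at s q a ++ factor_at s (q + a) b.
Proof.
rewrite /factor_at iotaD map_cat; congr (_ ++ _).
rewrite add0n -{1}(addn0 a) iotaDl -map_comp; apply: eq_map => i /=.
by rewrite addnA.
Qed.

Lemma occ_cat x u v : occ x (u ++ v) = occ x u + occ x v.
Proof. by rewrite /occ count_cat. Qed.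

Lemma occ1 x s k : occ x (factor_at s k 1) = (s k == x).
Proof. by rewrite /occ /factor_at /= addn0 addn0. Qed.

Lemma occ_shift x s n p :
  occ x (factor_at s (n+1) p) + (s n == x) = occ x (factor_at s n p) + (s (n + p) == x).
Proof.
have h1 := factor_split s n 1 p. have h2 := factor_split s n p 1.
rewrite addnC in h2. rewrite h2 in h1.
have := congr1 (occ x) h1. rewrite !occ_cat !occ1. lia.
Qed.

Lemma letter_eq (a b x : letter) : (a == x) = (b == x) -> a = b.
Proof. by case: a; case: b; case: x. Qed.

Lemma occ_ab u : occ la u + occ lb u = size u.
Proof. rewrite /occ; elim: u => [|[] u IH] //=; rewrite ?addSn ?addnS IH //. Qed.

Lemma sumS (f : nat -> nat) K : \sum_(t < K.+1) f t = \sum_(t < K) f t + f K.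
Proof. by rewrite big_ord_recr. Qed.

Lemma occ_sum x s q (len : nat -> nat) K :
  occ x (factor_at s q (\sum_(t < K) len t)) =
  \sum_(t < K) occ x (factor_at s (q + \sum_(u < t) len u) (len t)).
Proof.
elim: K => [|K IH]; first by rewrite !big_ord0.
by rewrite !big_ord_recr /= factor_split occ_cat IH.
Qed.

Lemma sum_const_nat n t : \sum_(u < t) n = t * n.
Proof. elim: t => [|t IH]; rewrite ?big_ord0 // big_ord_recr IH /=; lia. Qed.

Lemma sum1 (a b : nat -> nat) K i :
  (forall t, t < K -> a t <= b t) -> i < K -> a i < b i ->
  \sum_(t < K) a t + 1 <= \sum_(t < K) b t.
Proof.
elim: K => [|K IH] H hi hab //.
rewrite !sumS.
have hK := H K (ltnSn K).
case: (ltnP i K) => hiK.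
  have := IH (fun t ht => H t (ltnW ht)) hiK hab. lia.
have eiK : i = K by lia. subst i.
have : \sum_(t < K) a t <= \sum_(t < K) b t.
  apply: leq_sum => t _; exact: H (ltnW (ltn_ord t)).
lia.
Qed.

Lemma sum2 (a b : nat -> nat) K i j :
  (forall t, t < K -> a t <= b t) -> i < j -> j < K -> a i < b i -> a j < b j ->
  \sum_(t < K) a t + 2 <= \sum_(t < K) b t.
Proof.
elim: K => [|K IH] H hij hj hai haj //.
rewrite !sumS.
have hK := H K (ltnSn K).
case: (ltnP j K) => hjK.
  have := IH (fun t ht => H t (ltnW ht)) hij hjK hai haj. lia.
have ejK : j = K by lia. subst j.
have := @sum1 a b K i (fun t ht => H t (ltnW ht)) hij hai. lia.
Qed.

Lemma pigeon (G : nat) (f : nat -> nat) :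
  (forall i, i <= G -> f i < G) -> exists i j, i < j <= G /\ f i = f j.
Proof.
move=> hf; apply: NNPP => hn.
pose F (i : 'I_G.+1) : 'I_G := Ordinal (hf i (ltn_ord i)).
have inj : injective F.
  move=> i j /(congr1 val) /= e; apply: val_inj => /=.
  case: (ltngtP i j) => // hij; exfalso; apply: hn.
    by exists i, j; split => //; rewrite hij /= -ltnS.
  by exists j, i; split => //; rewrite hij /= -ltnS.
by have := leq_card F inj; rewrite !card_ord ltnn.
Qed.
Set Implicit Arguments.

Lemma heavy_le s x w : balanced s -> rich s x w ->
  forall q, occ x (factor_at s q (size w)) <= occ x w.
Proof.
move=> hb [v [fv [sv lt]]] q.
have hsz : size (factor_at s q (size w)) = size v by rewrite size_factor_at sv.
have [h _] := hb (factor_at s q (size w)) v x (factor_is_factor s q _) fv hsz.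
lia.
Qed.

Lemma rich_eq s x w1 w2 : balanced s -> is_factor s w1 -> is_factor s w2 ->
  rich s x w1 -> rich s x w2 -> size w1 = size w2 -> occ x w1 = occ x w2.
Proof.
move=> hb [k1 e1] [k2 e2] r1 r2 es.
have h1 := heavy_le hb r2 k1. have h2 := heavy_le hb r1 k2.
rewrite -es -e1 in h1. rewrite es -e2 in h2. lia.
Qed.

Lemma const_periodic s x p N : 0 < p ->
  (forall q, N <= q -> occ x (factor_at s (q+1) p) = occ x (factor_at s q p)) ->
  ult_periodic s.
Proof.
move=> hp h; exists p, N; split => // n hn.
apply: (@letter_eq _ _ x).
have := occ_shift x s n p. rewrite (h n hn).
case: (s (n + p) == x); case: (s n == x) => /=; lia.
Qed.

Lemma rich_some s w : sturmian s -> is_factor s w -> 0 < size w ->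
  exists z, rich s z w.
Proof.
move=> [hnp hb] [k ek] hw.
case: (classic (exists q, occ la (factor_at s q (size w)) <> occ la w)).
  move=> [q hq].
  have := occ_ab (factor_at s q (size w)). have := occ_ab w.
  rewrite size_factor_at => e1 e2.
  case: (ltngtP (occ la (factor_at s q (size w))) (occ la w)) => c.
  - exists la; exists (factor_at s q (size w)); split; first exact: factor_is_factor.
    by rewrite size_factor_at.
  - exists lb; exists (factor_at s q (size w)); split; first exact: factor_is_factor.
    rewrite size_factor_at; split => //; lia.
  - by exfalso; apply: hq.
move=> hn; exfalso; apply: hnp.
apply: (@const_periodic s la (size w) 0) => // q _.
have e : forall q, occ la (factor_at s q (size w)) = occ la w.
  by move=> q'; apply: NNPP => hne; apply: hn; exists q'.
by rewrite !e.
Qed.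

Lemma r_s_rich s w : sturmian s -> is_factor s w -> 0 < size w ->
  rich s (r_s s w) w.
Proof. move=> hs hf hw; rewrite /r_s; exact: (epsilon_spec (inhabits la) (fun z => rich s z w) (rich_some hs hf hw)). Qed.

Lemma light_unbounded s x w : sturmian s -> rich s x w -> 0 < size w ->
  forall N0, exists q, N0 <= q /\ occ x (factor_at s q (size w)) < occ x w.
Proof.
move=> [hnp hb] hr hw N0; apply: NNPP => hn; apply: hnp.
have e : forall q, N0 <= q -> occ x (factor_at s q (size w)) = occ x w.
  move=> q hq; apply/eqP; rewrite eqn_leq heavy_le //=.
  rewrite leqNgt; apply/negP => hlt; apply: hn; by exists q.
apply: (@const_periodic s x (size w) N0) => // q hq.
by rewrite !e //; lia.
Qed.

Lemma syndetic s x w : sturmian s -> rich s x w -> 0 < size w ->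
  exists G, forall q, exists d, d < G /\ occ x (factor_at s (q + d) (size w)) < occ x w.
Proof.
move=> hs hr hw. have hb := hs.2.
have lu := light_unbounded hs hr hw.
pose P N q := N <= q /\ occ x (factor_at s q (size w)) < occ x w.
pose nxt N := epsilon (inhabits 0) (P N).
have hnxt : forall N, P N (nxt N) := fun N => epsilon_spec _ _ (lu N).
pose l k := iter k (fun m => nxt m.+1) (nxt 0).
have hl : forall k, occ x (factor_at s (l k) (size w)) < occ x w.
  by case=> [|k]; [exact: (hnxt 0).2 | exact: (hnxt _).2].
have inc : forall k k', k < k' -> l k < l k'.
  apply: (homo_ltn (r := fun a b => a < b)); first by move=> ???; apply: ltn_trans.
  move=> k; exact: (hnxt (l k).+1).1.
have [k [k' [hkk' he]]] := @pigeon (size w) (fun k => l k %% size w) (fun i _ => ltn_pmod _ hw).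
move: hkk' => /andP [hk1 _].
have hl1 := hl k. have hl2 := hl k'.
have hab : l k < l k' := inc _ _ hk1.
move: he hl1 hl2 hab.
set n := size w. set a := l k. set b := l k' => he hl1 hl2 hab.
have hdvd : n %| b - a.
  by rewrite -eqn_mod_dvd ?(ltnW hab) //; apply/eqP.
pose D := (b - a) %/ n.
have eb : b = a + D * n by rewrite /D divnK // subnKC // ltnW.
have hD : 0 < D.
  rewrite lt0n; apply/eqP => hD0; move: eb; rewrite hD0 mul0n addn0 => eb.
  by rewrite eb ltnn in hab.
exists (D.+1 * n) => q.
apply: NNPP => hn.
have heavy : forall t, t < D.+1 -> occ x w <= occ x (factor_at s (q + t * n) n).
  move=> t ht; rewrite leqNgt; apply/negP => hlt; apply: hn; exists (t * n); split => //.
  by rewrite ltn_mul2r hw ht.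
have Eq := occ_sum x s q (fun _ => n) D.+1.
have Ea := occ_sum x s a (fun _ => n) D.+1.
rewrite sum_const_nat in Eq Ea.
have Eq' : \sum_(t < D.+1) occ x (factor_at s (q + \sum_(u < t) n) n) =
   \sum_(t < D.+1) occ x (factor_at s (q + t * n) n).
  by apply: eq_bigr => t _; rewrite sum_const_nat.
have Ea' : \sum_(t < D.+1) occ x (factor_at s (a + \sum_(u < t) n) n) =
   \sum_(t < D.+1) occ x (factor_at s (a + t * n) n).
  by apply: eq_bigr => t _; rewrite sum_const_nat.
rewrite Eq' in Eq. rewrite Ea' in Ea.
have low : \sum_(t < D.+1) occ x w <= \sum_(t < D.+1) occ x (factor_at s (q + t * n) n).
  by apply: leq_sum => t _; apply: heavy.
rewrite sum_const_nat in low.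
have up := @sum2 (fun t => occ x (factor_at s (a + t * n) n)) (fun _ => occ x w) D.+1 0 D.
rewrite sum_const_nat in up.
have up' := up (fun t _ => heavy_le hb hr _) hD (ltnSn D).
rewrite mul0n addn0 -eb in up'.
have up'' := up' hl1 hl2.
have hsz : size (factor_at s q (D.+1 * n)) = size (factor_at s a (D.+1 * n)) by rewrite !size_factor_at.
have [hbal _] := hb _ _ x (factor_is_factor s q _) (factor_is_factor s a _) hsz.
lia.
Qed.

Lemma prefix_eq s U t : is_factorization s U ->
  factor_at s (start_pos U t) (size (U t)) = U t.
Proof.
move=> hf; apply: (@eq_from_nth _ la); rewrite ?size_factor_at // => k hk.
rewrite /factor_at (nth_map 0) ?size_iota // nth_iota // add0n.
by symmetry; apply: hf.
Qed.

Lemma uniform s U x M : sturmian s -> is_factorization s U ->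
  (forall i, 0 < size (U i)) -> (forall i, rich s x (U i)) ->
  exists G, forall i, size (U i) <= M -> forall q, exists d,
    d < G /\ occ x (factor_at s (q + d) (size (U i))) < occ x (U i).
Proof.
move=> hs hf hpos hr.
have fac : forall i, is_factor s (U i).
  by move=> i; exists (start_pos U i); rewrite prefix_eq.
elim: M => [|M [G1 hG1]].
  by exists 0 => i hi; have := hpos i; rewrite leqn0 in hi; rewrite (eqP hi).
case: (classic (exists i0, size (U i0) = M.+1)) => [[i0 hi0]|hno].
  have [G2 hG2] := syndetic hs (hr i0) (hpos i0).
  exists (G1 + G2) => i hi q.
  case: (ltnP M (size (U i))) => hM.
    have es : size (U i) = size (U i0) by lia.
    have eo := rich_eq hs.2 (fac i) (fac i0) (hr i) (hr i0) es.
    have [d [hd hl]] := hG2 q.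
    exists d; split; first by lia.
    by rewrite es eo.
  have [d [hd hl]] := hG1 i hM q.
  exists d; split => //; lia.
exists G1 => i hi q; apply: hG1.
case: (ltnP M (size (U i))) => hM //.
by exfalso; apply: hno; exists i; lia.
Qed.

Theorem mainTheorem2 (s : infword) (U : nat -> seq letter) :
  sturmian s ->
  is_factorization s U ->
  (forall i, 0 < size (U i)) ->
  (forall i j, r_s s (U i) = r_s s (U j)) ->
  forall M : nat, 0 < M -> exists i, M < size (U i).
Proof.
move=> hs hf hpos hr M hM.
apply: NNPP => hn.
have hall : forall i, size (U i) <= M.
  by move=> i; rewrite leqNgt; apply/negP => h; apply: hn; exists i.
have fac : forall i, is_factor s (U i).
  by move=> i; exists (start_pos U i); rewrite prefix_eq.
pose x := r_s s (U 0).
have rich_all : forall i, rich s x (U i).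
  by move=> i; rewrite /x -(hr i 0); apply: r_s_rich.
have [G hG] := uniform M hs hf hpos rich_all.
pose Q i d := d < G /\ occ x (factor_at s (start_pos U i + d) (size (U i))) < occ x (U i).
pose p i := epsilon (inhabits 0) (Q i).
have hp : forall i, Q i (p i).
  move=> i; apply: epsilon_spec; exact: hG i (hall i) (start_pos U i).
have [i [j [/andP [hij _] hpij]]] := @pigeon G p (fun i _ => (hp i).1).
pose P := p i.
have EqP := occ_sum x s P (fun t => size (U t)) j.+1.
have E0 : \sum_(t < j.+1) occ x (factor_at s (0 + \sum_(u < t) size (U u)) (size (U t))) =
  \sum_(t < j.+1) occ x (U t).
  by apply: eq_bigr => t _; rewrite add0n (prefix_eq t hf).
have Eq0 := etrans (occ_sum x s 0 (fun t => size (U t)) j.+1) E0.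
have up := @sum2 (fun t => occ x (factor_at s (P + \sum_(u < t) size (U u)) (size (U t))))
   (fun t => occ x (U t)) j.+1 i j (fun t _ => heavy_le hs.2 (rich_all t) _) hij (ltnSn j).
have li := (hp i).2. have lj := (hp j).2.
rewrite -hpij in lj. rewrite addnC in li. rewrite addnC in lj.
have up' := up li lj.
have hsz : size (factor_at s 0 (\sum_(t < j.+1) size (U t))) =
  size (factor_at s P (\sum_(t < j.+1) size (U t))) by rewrite !size_factor_at.
have [hbal _] := hs.2 _ _ x (factor_is_factor s 0 _) (factor_is_factor s P _) hsz.
lia.
Qed.
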